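(* Let $t\geq 5$ and let $H_t$ be the graph with vertices $u,v,w,b,a_1,\dots,a_{t-3}$ and edges $ua_i$ and $a_iv$ for $i=1,\dots,t-3$, edges $ub$ and $bw$, and two parallel edges joining $v$ and $w$. Then $L(H_t)$ has a $K_t$-minor but no $K_t$-immersion.
   Context: Graphs are finite and may have parallel edges but no loops. $L(H)$ is the simple graph with vertex set $E(H)$ in which two distinct edges of $H$ are adjacent iff they share at least one endpoint. A graph $G$ has a $K_t$-immersion if there is an injective map $\phi$ from the vertex set of $K_t$ to $V(G)$ and, for each pair $u\neq v$ of vertices of $K_t$, a path in $G$ joining $\phi(u)$ and $\phi(v)$, such that these paths are pairwise edge-disjoint. $G$ has a $K_t$-minor if $K_t$ can be obtained from a subgraph of $G$ by contracting edges. *)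

(* Defs.v *)
From mathcomp Require Import all_boot.
Set Implicit Arguments. Unset Strict Implicit. Unset Printing Implicit Defensive.

Definition pedges (T : eqType) (x : T) (p : seq T) : seq (T * T) := zip (x :: p) p.

Definition is_path (T : finType) (adj : rel T) (x y : T) (p : seq T) : bool :=
  [&& path adj x p, last x p == y & uniq (x :: p)].

Definition edge_disjoint (T : eqType) (x : T) (p : seq T) (y : T) (q : seq T) : bool :=
  all (fun e => (e \notin pedges y q) && ((e.2, e.1) \notin pedges y q)) (pedges x p).

Definition has_K_immersion (T : finType) (adj : rel T) (t : nat) : Prop :=
  exists (phi : 'I_t -> T) (P : 'I_t -> 'I_t -> seq T),
    injective phi /\
    (forall i j : 'I_t, i < j -> is_path adj (phi i) (phi j) (P i j)) /\
    (forall i j k l : 'I_t, i < j -> k < l -> (i, j) != (k, l) ->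
        edge_disjoint (phi i) (P i j) (phi k) (P k l)).

Definition has_K_minor (T : finType) (adj : rel T) (t : nat) : Prop :=
  exists B : 'I_t -> {set T},
    (forall i, B i != set0) /\
    (forall i j, i != j -> [disjoint B i & B j]) /\
    (forall i, {in B i &, forall x y,
        connect [rel a b | [&& adj a b, a \in B i & b \in B i]] x y}) /\
    (forall i j, i != j -> exists x y, [/\ x \in B i, y \in B j & adj x y]).

Definition Hu := 0. Definition Hv := 1. Definition Hw := 2. Definition Hb := 3.
Definition Ha (i : nat) := 4 + i.

(* Edges of H_t (a finite type, so parallel edges are distinct elements):
     inl (inl i)       = the edge u a_i
     inl (inr i)       = the edge a_i v
     inr (inl false)   = the edge u b
     inr (inl true)    = the edge b w
     inr (inr false), inr (inr true) = the two parallel edges v w *)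
Definition HE (t : nat) : finType := (('I_(t - 3) + 'I_(t - 3)) + (bool + bool))%type.

Definition Hends (t : nat) (e : HE t) : nat * nat :=
  match e with
  | inl (inl i) => (Hu, Ha i)
  | inl (inr i) => (Ha i, Hv)
  | inr (inl false) => (Hu, Hb)
  | inr (inl true) => (Hb, Hw)
  | inr (inr _) => (Hv, Hw)
  end.

Definition Hinc (t : nat) (e : HE t) (x : nat) : bool :=
  ((Hends e).1 == x) || ((Hends e).2 == x).

Definition LH (t : nat) : rel (HE t) :=
  fun e f => (e != f) && (Hinc f (Hends e).1 || Hinc f (Hends e).2).

(* Main.v *)
Require Import Defs.
From mathcomp Require Import all_boot zify.
Set Implicit Arguments. Unset Strict Implicit.

Definition gH (t : nat) (x : HE t) : nat :=
  match x with
  | inl (inr k) => val k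
  | inr (inr false) => t - 3
  | inr (inr true) => t - 2
  | _ => t - 1
  end.

Arguments gH {t}.
Ltac unf := rewrite /LH /Hinc /=; rewrite /Ha /Hv /Hu /Hw /Hb /=.

Lemma hasv_LH t (x y : HE t) : Hinc x Hv -> Hinc y Hv -> x != y -> LH x y.
Proof.
rewrite /LH /Hinc => /orP[/eqP-> |/eqP->] hy -> //=; by rewrite hy ?orbT.
Qed.

Lemma rep_ex t (j : nat) : 5 <= t -> j < t - 1 -> exists y : HE t, gH y = j /\ Hinc y Hv.
Proof.
move=> ht hj; case: (ltnP j (t-3)) => hj3.
  by exists (inl (inr (Ordinal hj3))); split => //; unf.
have [->|->] : j = t - 3 \/ j = t - 2 by lia.
  by exists (inr (inr false)).
by exists (inr (inr true)).
Qed.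

Lemma big_ex t (j : nat) : 5 <= t -> j < t - 1 ->
  exists (x y : HE t), [/\ gH x = t - 1, gH y = j, LH x y & LH y x].
Proof.
move=> ht hj; case: (ltnP j (t-3)) => hj3.
  exists (inl (inl (Ordinal hj3))), (inl (inr (Ordinal hj3))); split => //; unf; by rewrite eqxx ?orbT.
have [->|->] : j = t - 3 \/ j = t - 2 by lia.
  by exists (inr (inl true)), (inr (inr false)); split => //; unf.
by exists (inr (inl true)), (inr (inr true)); split => //; unf.
Qed.

Lemma gH_lt t (x : HE t) : 5 <= t -> gH x < t.
Proof. move=> ht; case: x => [[k|k]|[[]|[]]] /=; try lia; have := ltn_ord k; lia. Qed.

Lemma gH_inj t (x y : HE t) : 5 <= t -> gH x = gH y -> gH x != t - 1 -> x = y.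
Proof.
move=> ht; case: x => [[k|k]|[[]|[]]]; case: y => [[k'|k']|[[]|[]]] /=;
 try (by move=> *; lia); try (have := ltn_ord k); try (have := ltn_ord k');
 try (by move=> *; lia); try by [].
by move=> _ _ /val_inj -> .
Qed.

Lemma minor_part t : 5 <= t -> has_K_minor (@LH t) t.
Proof.
move=> ht.
exists (fun i : 'I_t => [set x : HE t | gH x == i]); split; [|split; [|split]].
- move=> i; apply/set0Pn.
  case: (ltnP i (t-1)) => hi.
    by have [y [hy _]] := rep_ex ht hi; exists y; rewrite inE hy.
  by exists (inr (inl true)); rewrite inE /=; have := ltn_ord i; lia.
- move=> i j hij; apply/pred0P => x /=; rewrite !inE.
  apply/negP => /andP[/eqP h1 /eqP h2]; move/negP: hij; apply; apply/eqP/val_inj; rewrite /= -h1 -h2 //.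
- move=> i x y; rewrite !inE => /eqP hx /eqP hy.
  case: (boolP (gH x == t - 1)) => hxt; last first.
    by have -> := @gH_inj t x y ht (etrans hx (esym hy)) hxt; apply: connect0.
  set R := SimplRel _.
  have hub : gH (inr (inl false) : HE t) = i by rewrite -hx (eqP hxt).
  have key : forall z : HE t, gH z = i -> connect R z (inr (inl false)) /\ connect R (inr (inl false)) z.
    move=> z hz; case: (boolP (z == inr (inl false))) => [/eqP -> | hz0]; first by split; apply: connect0.
    have hzt : gH z = t - 1 by rewrite hz -hx (eqP hxt).
    split; apply: connect1; rewrite /R /= !inE hz hub eqxx !andbT.
      move: hz0 hzt; case: z {hz} => [[k|k]|[[]|[]]] //= _; try (by have := ltn_ord k; lia); try lia;
        move=> *; unf; by rewrite ?eqxx ?orbT.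
    move: hz0 hzt; case: z {hz} => [[k|k]|[[]|[]]] //= _; try (by have := ltn_ord k; lia); try lia;
        move=> *; unf; by rewrite ?eqxx ?orbT.
  have [h1 _] := key x hx; have [_ h2] := key y hy.
  exact: connect_trans h1 h2.
- move=> i j hij.
  have hi := ltn_ord i; have hj := ltn_ord j.
  have hne : nat_of_ord i != nat_of_ord j by [].
  case: (boolP (nat_of_ord i == t - 1)) => hit.
    have hj1 : j < t - 1 by move: hne hj (eqP hit); lia.
    have [x [y [hx hy h1 h2]]] := big_ex ht hj1.
    by exists x, y; rewrite !inE hx hy (eqP hit).
  case: (boolP (nat_of_ord j == t - 1)) => hjt.
    have hi1 : i < t - 1 by move: hne hi (eqP hjt); lia.
    have [x [y [hx hy h1 h2]]] := big_ex ht hi1.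
    by exists y, x; rewrite !inE hx hy (eqP hjt).
  have hi1 : i < t - 1 by lia.
  have hj1 : j < t - 1 by lia.
  have [x [hx vx]] := rep_ex ht hi1; have [y [hy vy]] := rep_ex ht hj1.
  exists x, y; rewrite !inE hx hy !eqxx; split => //; apply: hasv_LH => //.
  by apply/eqP => exy; move: hne; rewrite -hx -hy exy eqxx.
Qed.

Definition ll t (k : 'I_(t-3)) : HE t := inl (inl k).
Definition lr t (k : 'I_(t-3)) : HE t := inl (inr k).

Lemma eq_ll t (a b : 'I_(t-3)) : (inl (inl a) == inl (inl b) :> HE t) = (a == b).
Proof. by apply/eqP/eqP => [[]|->]. Qed.
Lemma eq_lr t (a b : 'I_(t-3)) : (inl (inr a) == inl (inr b) :> HE t) = (a == b).
Proof. by apply/eqP/eqP => [[]|->]. Qed.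

Lemma cardU_le (T : finType) (A B : {set T}) : #|A :|: B| <= #|A| + #|B|.
Proof. exact: (leq_card_setU A B).1. Qed.

Lemma deg_bad t (e : HE t) : 5 <= t -> ~~ Hinc e Hv ->
  #|[set x : HE t | LH e x || LH x e]| <= t - 2.
Proof.
move=> ht; case: e => [[k|k]|[[]|[]]]; unf => // _.
- apply: leq_trans (subset_leq_card (_ : _ \subset (@ll t) @: [set~ k] :|: [set lr k; inr (inl false)])) _.
    apply/subsetP => x; rewrite inE; case: x => [[k'|k']|[[]|[]]]; unf; rewrite ?eq_ll ?eqxx ?orbT ?andbT /=.
    + move=> h; rewrite in_setU; apply/orP; left; apply: (imset_f (@ll t)).
      by rewrite in_setC1; case/orP: h => //; rewrite eq_sym.
    + move=> h; have e : k' = k by apply: ord_inj; move: h; lia.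
      by subst; rewrite in_setU in_set2 eqxx orbT.
    + lia.
    + by rewrite in_setU in_set2 eqxx !orbT.
    + lia.
    + lia.
  apply: leq_trans (cardU_le _ _) _; rewrite cards2.
  apply: leq_trans (leq_add (leq_imset_card _ _) (_ : _ <= 2)) _ => //.
  have := cardsC1 k; rewrite card_ord; lia.
- apply: leq_trans (subset_leq_card (_ : _ \subset [set inr (inl false)] :|: [set inr (inr false); inr (inr true)])) _.
    apply/subsetP => x; rewrite inE; case: x => [[k'|k']|[[]|[]]]; unf; rewrite ?eqxx ?orbT ?andbT /=;
      first [ by [] | lia | by move=> _; rewrite !inE eqxx ?orbT | by rewrite !inE eqxx ?orbT ].
  apply: leq_trans (cardU_le _ _) _; rewrite cards1 cards2 /=; lia.
- apply: leq_trans (subset_leq_card (_ : _ \subset (@ll t) @: setT :|: [set inr (inl true)])) _.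
    apply/subsetP => x; rewrite inE; case: x => [[k'|k']|[[]|[]]]; unf; rewrite ?eqxx ?orbT ?andbT /=;
      first [ by [] | lia | by move=> _; rewrite !inE eqxx ?orbT | by rewrite !inE eqxx ?orbT
            | by move=> _; rewrite in_setU; apply/orP; left; apply: (imset_f (@ll t)) ].
  apply: leq_trans (cardU_le _ _) _; rewrite cards1.
  apply: leq_trans (leq_add (leq_imset_card _ _) (leqnn 1)) _.
  rewrite cardsT card_ord; lia.
Qed.

Lemma good_card t : 5 <= t -> #|[set x : HE t | Hinc x Hv]| <= t - 1.
Proof.
move=> ht.
apply: leq_trans (subset_leq_card (_ : _ \subset (@lr t) @: setT :|: [set inr (inr false); inr (inr true)])) _.
  apply/subsetP => x; rewrite inE; case: x => [[k'|k']|[[]|[]]]; unf;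
  first [ by [] | lia | by move=> _; rewrite !inE eqxx ?orbT | by rewrite !inE eqxx ?orbT
        | by move=> _; rewrite in_setU; apply/orP; left; apply: (imset_f (@lr t)) ].
apply: leq_trans (cardU_le _ _) _; rewrite cards2.
apply: leq_trans (leq_add (leq_imset_card _ _) (leqnn 2)) _.
rewrite cardsT card_ord; lia.
Qed.

Lemma pedges_adj (T : eqType) (r : rel T) s p a b :
  path r s p -> (a, b) \in pedges s p -> r a b.
Proof.
elim: p s => [|y p IH] s //= /andP[hsy hp]; rewrite /pedges /= in_cons => /orP[/eqP [-> ->] //|h].
exact: IH h.
Qed.

Lemma pedges_first (T : eqType) (s y : T) p : (s, y) \in pedges s (y :: p).
Proof. by rewrite /pedges /= in_cons eqxx. Qed.

Lemma pedges_last (T : eqType) (s : T) p : p != [::] ->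
  exists x, (x, last s p) \in pedges s p.
Proof.
elim: p s => [|y p IH] s // _.
case: p IH => [|z p] IH; first by exists s; rewrite /pedges /= in_cons eqxx.
have [x hx] := IH y isT; exists x; rewrite /pedges /= in_cons; apply/orP; right; exact: hx.
Qed.

Lemma imm_deg (T : finType) (adj : rel T) t (phi : 'I_t -> T) (P : 'I_t -> 'I_t -> seq T) :
  injective phi ->
  (forall i j : 'I_t, i < j -> is_path adj (phi i) (phi j) (P i j)) ->
  (forall i j k l : 'I_t, i < j -> k < l -> (i, j) != (k, l) ->
        edge_disjoint (phi i) (P i j) (phi k) (P k l)) ->
  forall i, t.-1 <= #|[set x | adj (phi i) x || adj x (phi i)]|.
Proof.
move=> inj hp hd i.
pose a (j : 'I_t) := if i < j then i else j.
pose b (j : 'I_t) := if i < j then j else i.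
pose E (j : 'I_t) (x : T) := ((phi i, x) \in pedges (phi (a j)) (P (a j) (b j))) ||
              ((x, phi i) \in pedges (phi (a j)) (P (a j) (b j))).
set N := [set x | _].
have hab : forall j, j != i -> a j < b j.
  move=> j hj; have hj' : nat_of_ord j != nat_of_ord i by [].
  rewrite /a /b; case: ifP => h //; lia.
have ex : forall j, j != i -> exists x, E j x && (x \in N).
  move=> j hj; have := hp _ _ (hab j hj); rewrite /is_path => /and3P[hpath hlast _].
  have hne : P (a j) (b j) != [::].
    apply/eqP => h0; move: hlast; rewrite h0 /= => /eqP /inj hh.
    by have := hab j hj; rewrite hh ltnn.
  rewrite /E /a /b in hpath hlast hne *.
  case hij: (i < j) in hpath hlast hne *.
  - move: hpath hne; case: (P i j) => [|y p] // hpath _.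
    exists y; rewrite pedges_first /= inE; apply/orP; left.
    by apply: (pedges_adj hpath); apply: pedges_first.
  - have [x hx] := pedges_last (phi j) hne.
    rewrite (eqP hlast) in hx.
    exists x; rewrite hx orbT /= inE; apply/orP; right.
    exact: (pedges_adj hpath hx).
pose f (j : 'I_t) := odflt (phi i) [pick x | E j x && (x \in N)].
have fP : forall j, j != i -> E j (f j) && (f j \in N).
  move=> j hj; rewrite /f; case: pickP => [x hx //| h0].
  by have [x hx] := ex j hj; rewrite h0 in hx.
have finj : {in [set~ i] &, injective f}.
  move=> j k; rewrite !in_setC1 => hj hk hfe; apply/eqP/negP => /negP hjk.
  have hj' : nat_of_ord j != nat_of_ord i by [].
  have hk' : nat_of_ord k != nat_of_ord i by [].
  have hjk' : nat_of_ord j != nat_of_ord k by [].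
  have hpair : (a j, b j) != (a k, b k).
    apply/negP => /eqP [h1 h2]; move: h1 h2; rewrite /a /b.
    case: ifP => h3; case: ifP => h4 h1 h2.
    + by move: hjk'; rewrite h2 eqxx.
    + by move: hk'; rewrite -h1 eqxx.
    + by move: hj'; rewrite h1 eqxx.
    + by move: hjk'; rewrite h1 eqxx.
  have := hd _ _ _ _ (hab j hj) (hab k hk) hpair.
  rewrite /edge_disjoint => /allP H.
  have /andP[Ej _] := fP j hj; have /andP[Ek _] := fP k hk.
  rewrite -hfe in Ek.
  rewrite /E in Ej Ek.
  case/orP: Ej => he; have /andP[n1 n2] := H _ he; move: n1 n2 Ek => /= /negbTE -> /negbTE ->; by [].
have hsub : f @: [set~ i] \subset N.
  apply/subsetP => x /imsetP [j hj ->]; rewrite in_setC1 in hj.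
  by have /andP[_ ->] := fP j hj.
have := subset_leq_card hsub; rewrite card_in_imset // cardsC1 card_ord.
by [].
Qed.

Theorem mainTheorem7 (t : nat) (ht : 5 <= t) :
  has_K_minor (@LH t) t /\ ~ has_K_immersion (@LH t) t.
Proof.
split; first exact: minor_part.
move=> [phi [P [inj [hp hd]]]].
have good : forall i, Hinc (phi i) Hv.
  move=> i; apply/negP => /negP hb.
  have := imm_deg inj hp hd i; have := deg_bad ht hb; lia.
have hsub : phi @: setT \subset [set x : HE t | Hinc x Hv].
  by apply/subsetP => x /imsetP [i _ ->]; rewrite inE.
have := subset_leq_card hsub; rewrite card_imset // cardsT card_ord.
have := good_card ht; lia.
Qed.
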